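(* Let $G$ be a finite nonabelian group such that $\{w(G): d\ge1,\ w\in F_d\}=\{\{1\},Z(G),G\}$, i.e. the only word images of $G$ are $\{1\}$, $Z(G)$ and $G$. Then $G$ is a special $p$-group for some prime $p$.
   Context: $F_d$ is the free group on $d$ letters; for $w\in F_d$, $w(G)$ is the image of the word map $G^d\to G$ given by evaluating $w$. A special $p$-group is a finite $p$-group whose center, derived subgroup and Frattini subgroup coincide and are elementary abelian. *)

(* Defs.v *)
From mathcomp Require Import all_boot all_fingroup all_solvable.
Set Implicit Arguments. Unset Strict Implicit. Unset Printing Implicit Defensive.
Local Open Scope group_scope.

(* A word in d letters x_0,...,x_{d-1}: a finite sequence of letters x_i^(+1)
   (sign false) or x_i^(-1) (sign true).  Every element of the free group F_d
   is represented by such a (syntactic) word, and the word map only depends on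
   the represented free group element, so word images over syntactic words are
   exactly the word images over F_d. *)
Definition word (d : nat) := seq ('I_d * bool).

Definition word_eval (gT : finGroupType) d (w : word d) (x : {ffun 'I_d -> gT}) : gT :=
  \prod_(l <- w) (if l.2 then (x l.1)^-1 else x l.1).

Definition word_image (gT : finGroupType) (G : {set gT}) d (w : word d) : {set gT} :=
  [set word_eval w x | x in [pred x : {ffun 'I_d -> gT} | [forall i, x i \in G]]].

Definition special_pgroup (gT : finGroupType) (p : nat) (G : {set gT}) : Prop :=
  [/\ p.-group G, special G & p.-abelem 'Z(G)].

(* Main.v *)
Require Import Defs.
From mathcomp Require Import all_boot all_fingroup all_solvable.
Local Open Scope group_scope.

Lemma word_eval_pow (gT : finGroupType) n (x : {ffun 'I_1 -> gT}) :
  word_eval (nseq n (ord0, false)) x = x ord0 ^+ n.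
Proof.
rewrite /word_eval; elim: n => [|n IH]; first by rewrite big_nil.
by rewrite /= big_cons /= IH expgS.
Qed.

Definition cw : word 2 := [:: (ord0, true); (ord_max, true); (ord0, false); (ord_max, false)].

Lemma word_eval_comm (gT : finGroupType) (x : {ffun 'I_2 -> gT}) :
  word_eval cw x = [~ x ord0, x ord_max].
Proof.
by rewrite /word_eval /cw !big_cons big_nil /= /commg /conjg !mulgA mulg1.
Qed.

Lemma mem_word_image (gT : finGroupType) (G : {set gT}) d (w : word d) (x : {ffun 'I_d -> gT}) :
  (forall i, x i \in G) -> word_eval w x \in word_image G w.
Proof. by move=> Hx; apply: imset_f; rewrite inE; apply/forallP. Qed.

Lemma word_imageP (gT : finGroupType) (G : {set gT}) d (w : word d) y :
  y \in word_image G w -> exists2 x : {ffun 'I_d -> gT}, (forall i, x i \in G) & y = word_eval w x.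
Proof.
by case/imsetP=> x; rewrite inE => /forallP Hx ->; exists x.
Qed.

Theorem theorem5p2 (gT : finGroupType) (G : {group gT}) :
  ~~ abelian G ->
  (forall S : {set gT},
     (exists d, exists w : word d, (0 < d)%N /\ word_image G w = S) <->
     (S = 1 \/ S = 'Z(G) \/ S = G)) ->
  exists p, prime p /\ special_pgroup p G.
Proof.
move=> nabG H.
have Himg : forall d (w : word d), (0 < d)%N ->
    word_image G w = 1 \/ word_image G w = 'Z(G) \/ word_image G w = G.
  by move=> d w d0; apply/(proj1 (H _)); exists d, w.
have ntG : G :!=: 1 by apply: contra nabG => /eqP->; exact: abelian1.
have powZ : forall q, prime q -> q %| #|G| -> forall x, x \in G -> x ^+ q \in 'Z(G).
  move=> q qpr qG x Gx.
  have xS : x ^+ q \in word_image G (nseq q (ord0, false) : word 1).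
    have := @mem_word_image _ G 1 (nseq q (ord0, false)) [ffun _ => x].
    by rewrite word_eval_pow ffunE; apply=> i; rewrite ffunE.
  case: (Himg 1%N (nseq q (ord0, false)) isT) => [E|[E|E]]; rewrite E in xS.
  - by rewrite (set1P xS) group1.
  - exact: xS.
  exfalso.
  have sub1 : G \subset [set y ^+ q | y in G].
    apply/subsetP=> g Gg; rewrite -E in Gg.
    case/word_imageP: Gg => f Hf ->; rewrite word_eval_pow.
    exact: imset_f.
  have sub2 : [set y ^+ q | y in G] \subset G.
    by apply/subsetP=> _ /imsetP[y Gy ->]; rewrite groupX.
  have /imset_injP inj : #|[set y ^+ q | y in G]| == #|G|.
    by rewrite eqn_leq subset_leq_card // subset_leq_card.
  have [y Gy oy] := Cauchy qpr qG.
  have y1 : y = 1.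
    by apply: inj; rewrite ?group1 //= expg1n -oy expg_order.
  by move: oy; rewrite y1 order1 => q1; rewrite -q1 in qpr.
have G1 : (1 < #|G|)%N by rewrite cardG_gt1.
set p := pdiv #|G|.
have ppr : prime p by apply: pdiv_prime.
have pdvd : p %| #|G| by exact: pdiv_dvd.
have pG : p.-group G.
  apply/pnatP => // q qpr qdvd; rewrite inE.
  apply/negPn/negP => nqp.
  case/negP: nabG.
  have sGZ : G \subset 'Z(G).
    apply/subsetP=> x Gx.
    have cop : coprime p q by rewrite prime_coprime // dvdn_prime2 // eq_sym.
    have [a _ /dvdnP[k Ek]] := Bezoutl q (prime_gt0 ppr).
    rewrite (eqP cop) in Ek.
    have e1 : x ^+ (1 + a * q) \in 'Z(G).
      by rewrite Ek (mulnC k) expgM; apply: groupX; exact: powZ.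
    have e2 : x ^+ (a * q) \in 'Z(G) by rewrite (mulnC a) expgM; apply: groupX; exact: powZ.
    have := groupM e1 (groupVr e2).
    by rewrite expgD expg1 mulgK.
  exact: subset_trans sGZ (subsetIr _ _).
have Sc := Himg 2%N cw isT.
have commS : forall x y, x \in G -> y \in G -> [~ x, y] \in word_image G cw.
  move=> x y Gx Gy.
  have := @mem_word_image _ G 2 cw [ffun i => if i == ord0 then x else y].
  rewrite word_eval_comm !ffunE /= => ->; first by [].
  by move=> i; rewrite ffunE; case: (i == ord0).
have Scomm : forall z, z \in word_image G cw -> z \in [~: G, G].
  move=> z /word_imageP[f Hf ->]; rewrite word_eval_comm; exact: mem_commg.
have derZ : G^`(1) = 'Z(G).
  case: Sc => [E|[E|E]].
  - case/negP: nabG; apply/centsP => x Gx y Gy; apply/commgP.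
    by have := commS _ _ Gx Gy; rewrite E => /set1P ->.
  - rewrite derg1; apply/eqP; rewrite eqEsubset; apply/andP; split.
      rewrite gen_subG; apply/subsetP=> _ /imset2P[x y Gx Gy ->].
      by have := commS _ _ Gx Gy; rewrite E.
    by apply/subsetP=> z; rewrite -E => /Scomm.
  exfalso.
  have sG : G \subset [~: G, G] by apply/subsetP=> z Gz; apply: Scomm; rewrite E.
  have prop : [~: G, G] \proper G.
    apply: nil_comm_properl; [exact: (pgroup_nil pG) | exact: subxx | exact: ntG | ].
    by rewrite subsetI subxx normG.
  by move: prop; rewrite properE sG andbF.
have phiZ : 'Phi(G) = 'Z(G).
  rewrite (Phi_joing pG) (MhoE 1 pG) expn1 derZ; apply/joing_idPl.
  rewrite gen_subG; apply/subsetP=> _ /imsetP[x Gx ->].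
  exact: powZ.
have spG : special G by split.
exists p; split => //; split => //.
exact: center_special_abelem.
Qed.
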